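(* Suppose the setting below holds with step sizes $\gamma_k = A/k^{\alpha}$ for all $k\ge 1$, where $\alpha\in(0,1]$ and $A>0$ with $\gamma_k\in(0,1]$ for all $k$. Then for every agent $i\in[m]$, $\|x_i^k-\bar x^k\| = \mathcal{O}(1/k^{\alpha})$ as $k\to\infty$.
   Context: Setting. Problem: minimize $F(x)=\frac1m\sum_{i=1}^m f_i(x)$ over $x\in\Omega\subset\mathbb{R}^d$, where $f_i(x)=\frac1{n_i}\sum_{j=1}^{n_i} f_{i,j}(x)$; agent $i$ only knows $f_i$. Assumption 1: $\Omega$ is nonempty, convex and compact with diameter $\bar\rho=\max_{x,\hat x\in\Omega}\|x-\hat x\|$. Standing regularity: each $f_{i,j}$ is differentiable and $L$-smooth (gradient $L$-Lipschitz) on a neighborhood of $\Omega$, each $f_i$ is $G$-Lipschitz on $\Omega$, and $\|\nabla f_i(x)\|\le C$ for all $x\in\Omega$. Assumption 2: the $m$ agents communicate over a connected undirected graph; $W\in\mathbb{R}^{m\times m}$ is symmetric, has nonnegative entries, $W_{ij}=0$ unless $i=j$ or $\{i,j\}$ is an edge, and is doubly stochastic ($W\mathbf 1=W^\top\mathbf 1=\mathbf 1$); moreover $\lambda_2(W)$, the largest modulus of the eigenvalues of $W$ other than the simple eigenvalue $1$ (equivalently $\|W-\frac1m\mathbf 1\mathbf 1^\top\|_2$), satisfies $|\lambda_2(W)|<1$. Algorithm DstoFW with step sizes $\gamma_k\in(0,1]$, epoch length $q\in\mathbb{Z}^+$ and sample sizes $|S^k|$: initialize $x_i^1\in\Omega$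 and $d_i^1=v_i^1=g_i^1=\nabla f_i(x_i^1)$. For $k=1,2,\dots$ each agent $i$ computes: $\overline{x_i^k}=\sum_{j=1}^m W_{ij}x_j^k$; $u_i^k\in\arg\min_{u\in\Omega}\langle u,d_i^k\rangle$; $x_i^{k+1}=(1-\gamma_k)\overline{x_i^k}+\gamma_k u_i^k$; if $(k+1)\bmod q=0$ then $v_i^{k+1}=\frac1{n_i}\sum_{j=1}^{n_i}\nabla f_{i,j}(x_i^{k+1})$, otherwise a sample set $S^k$ of indices from $[n_i]$ is drawn uniformly at random (independently of the past) and $v_i^{k+1}=\frac1{|S^k|}\sum_{j\in S^k}[\nabla f_{i,j}(x_i^{k+1})-\nabla f_{i,j}(x_i^k)]+v_i^k$; then $g_i^{k+1}=d_i^k+v_i^{k+1}-v_i^k$ and $d_i^{k+1}=\sum_{j=1}^m W_{ij}g_j^{k+1}$. Notation: $\bar x^k=\frac1m\sum_i x_i^k$. *)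

(* Defs.v *)
From HB Require Import structures.
From mathcomp Require Import all_boot all_order all_algebra.
From mathcomp Require Import all_classical all_reals all_analysis.
Set Implicit Arguments. Unset Strict Implicit. Unset Printing Implicit Defensive.
Import Order.TTheory GRing.Theory Num.Theory.
Import numFieldNormedType.Exports.
Local Open Scope classical_set_scope.
Local Open Scope ring_scope.

Definition dotv {R : realType} {dim : nat} (u w : 'rV[R]_dim) : R :=
  \sum_(j < dim) u 0 j * w 0 j.
Definition enorm {R : realType} {dim : nat} (u : 'rV[R]_dim) : R :=
  Num.sqrt (dotv u u).

Definition convex_set_rV {R : realType} {dim : nat} (O : set 'rV[R]_dim) :=
  forall x y t, O x -> O y -> 0 <= t <= 1 -> O ((1 - t) *: x + t *: y).

(* Spectral (Euclidean-operator) norm of a square matrix: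
   sup { ||y M|| : ||y|| = 1 }  (W symmetric, so row/column action agree). *)
Definition opnorm2 {R : realType} {m : nat} (M : 'M[R]_m) : R :=
  sup [set enorm (y *m M) | y in [set y : 'rV[R]_m | enorm y = 1]].

Definition avgmx {R : realType} (m : nat) : 'M[R]_m :=
  \matrix_(i, j) (m%:R)^-1.

Definition fullgrad {R : realType} {dim k : nat}
  (gf : 'I_k -> 'rV[R]_dim -> 'rV[R]_dim) (y : 'rV[R]_dim) : 'rV[R]_dim :=
  (k%:R)^-1 *: \sum_(j < k) gf j y.

Definition mix {R : realType} {dim m : nat} (W : 'M[R]_m)
  (z : 'I_m -> 'rV[R]_dim) (i : 'I_m) : 'rV[R]_dim :=
  \sum_(j < m) W i j *: z j.

Definition netavg {R : realType} {dim m : nat} (z : 'I_m -> 'rV[R]_dim)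
  : 'rV[R]_dim := (m%:R)^-1 *: \sum_(i < m) z i.

(* Main.v *)
Require Import Defs.
From HB Require Import structures.
From mathcomp Require Import all_boot all_order all_algebra.
From mathcomp Require Import all_classical all_reals all_analysis.
From mathcomp Require Import ring lra.
Import Order.TTheory GRing.Theory Num.Theory.
Import numFieldNormedType.Exports.
Local Open Scope classical_set_scope.
Local Open Scope ring_scope.

Set Implicit Arguments. Unset Strict Implicit.
Section H.
Variable R : realType.

Lemma dotv_ge0 n (u : 'rV[R]_n) : 0 <= dotv u u.
Proof. by apply: sumr_ge0 => j _; rewrite -expr2 sqr_ge0. Qed.

Lemma enorm_ge0 n (u : 'rV[R]_n) : 0 <= enorm u.
Proof. exact: sqrtr_ge0. Qed.

Lemma abs_le_enorm n (u : 'rV[R]_n) j : `|u 0 j| <= enorm u.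
Proof.
rewrite -sqrtr_sqr /enorm ler_wsqrtr // /dotv (bigD1 j) //= expr2 lerDl.
by apply: sumr_ge0 => i _; rewrite -expr2 sqr_ge0.
Qed.

Lemma sumsq_le n (F : 'I_n -> R) : \sum_j F j ^+ 2 <= (\sum_j `|F j|) ^+ 2.
Proof.
elim: n F => [|n IH] F; first by rewrite !big_ord0 expr0n.
rewrite !big_ord_recr /=.
have h := IH (fun j => F (widen_ord (leqnSn n) j)).
have h1 : 0 <= \sum_(i < n) `|F (widen_ord (leqnSn n) i)| by apply: sumr_ge0.
have h2 := normr_ge0 (F ord_max).
rewrite -[F ord_max ^+ 2]real_normK ?num_real //.
nra.
Qed.

Lemma enorm_le_sum n (u : 'rV[R]_n) : enorm u <= \sum_j `|u 0 j|.
Proof.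
rewrite /enorm -[X in _ <= X]ger0_norm ?sumr_ge0 // -sqrtr_sqr ler_wsqrtr //.
rewrite /dotv; under eq_bigr do rewrite -expr2.
exact: sumsq_le.
Qed.

Lemma enormZ n a (u : 'rV[R]_n) : enorm (a *: u) = `|a| * enorm u.
Proof.
rewrite /enorm -sqrtr_sqr -sqrtrM ?sqr_ge0 //; congr Num.sqrt.
rewrite /dotv mulr_sumr; apply: eq_bigr => j _; rewrite !mxE; ring.
Qed.

Lemma dotv_zero n (u w : 'rV[R]_n) : dotv u u = 0 -> dotv u w = 0.
Proof.
move=> h.
have h0 : forall j, u 0 j * u 0 j = 0.
  move=> j; apply: (psumr_eq0P _ h) => // i _; by rewrite -expr2 sqr_ge0.
rewrite /dotv big1 // => j _.
by have := h0 j => /eqP; rewrite mulf_eq0 orbb => /eqP ->; rewrite mul0r.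
Qed.

Lemma cauchy_schwarz n (u w : 'rV[R]_n) : dotv u w ^+ 2 <= dotv u u * dotv w w.
Proof.
have [z|nz] := eqVneq (dotv u u) 0.
  by rewrite z dotv_zero // expr0n mul0r.
have pos : 0 < dotv u u by rewrite lt0r nz dotv_ge0.
set t := - (dotv u w / dotv u u).
have : 0 <= dotv (t *: u + w) (t *: u + w) by apply: dotv_ge0.
have -> : dotv (t *: u + w) (t *: u + w) = t^+2 * dotv u u + 2 * t * dotv u w + dotv w w.
  rewrite /dotv !mulr_sumr -!big_split /=; apply: eq_bigr => j _; rewrite !mxE; ring.
rewrite /t => h.
have e : (- (dotv u w / dotv u u)) ^+ 2 * dotv u u + 2 * - (dotv u w / dotv u u) * dotv u w
   = - (dotv u w ^+ 2 / dotv u u) by field; rewrite gt_eqF.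
rewrite e in h.
have : dotv u w ^+ 2 / dotv u u <= dotv w w by lra.
by rewrite ler_pdivrMr // mulrC.
Qed.

Lemma dotvC n (u w : 'rV[R]_n) : dotv u w = dotv w u.
Proof. by apply: eq_bigr => j _; rewrite mulrC. Qed.

Lemma enormD n (u w : 'rV[R]_n) : enorm (u + w) <= enorm u + enorm w.
Proof.
have hu := enorm_ge0 u; have hw := enorm_ge0 w.
rewrite /enorm -[X in _ <= X]ger0_norm ?addr_ge0 // -sqrtr_sqr ler_wsqrtr //.
have -> : dotv (u + w) (u + w) = dotv u u + 2 * dotv u w + dotv w w.
  rewrite /dotv !mulr_sumr -!big_split /=; apply: eq_bigr => j _; rewrite !mxE; ring.
have cs : dotv u w <= Num.sqrt (dotv u u) * Num.sqrt (dotv w w).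
  rewrite -sqrtrM ?dotv_ge0 //; apply: le_trans (ler_norm _) _.
  by rewrite -sqrtr_sqr ler_wsqrtr // cauchy_schwarz.
have e1 := sqr_sqrtr (dotv_ge0 u); have e2 := sqr_sqrtr (dotv_ge0 w).
rewrite /enorm in hu hw.
nra.
Qed.


Lemma enorm0 n : enorm (0 : 'rV[R]_n) = 0.
Proof. rewrite /enorm /dotv big1 ?sqrtr0 // => j _; by rewrite mxE mul0r. Qed.

Lemma opnorm_bound m (M : 'M[R]_m) (y : 'rV[R]_m) :
  enorm (y *m M) <= opnorm2 M * enorm y.
Proof.
have [z|nz] := eqVneq (enorm y) 0.
  have -> : y = 0.
    apply/rowP => j; rewrite mxE; apply/normr0_eq0/eqP.
    by rewrite eq_le normr_ge0 andbT -z abs_le_enorm.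
  by rewrite mul0mx enorm0 mulr0.
have pos : 0 < enorm y by rewrite lt0r nz enorm_ge0.
set y' := (enorm y)^-1 *: y.
have ey' : enorm y' = 1 by rewrite enormZ ger0_norm ?invr_ge0 ?enorm_ge0 // mulVf.
have ub : has_ubound [set enorm (y *m M) | y in [set y : 'rV[R]_m | enorm y = 1]].
  exists (\sum_i \sum_j `|M j i|) => _ [z /= ez <-].
  apply: le_trans (enorm_le_sum _) _; apply: ler_sum => i _.
  rewrite mxE; apply: le_trans (ler_norm_sum _ _ _) _; apply: ler_sum => j _.
  rewrite normrM ler_piMl //; by rewrite -ez abs_le_enorm.
have := ub_le_sup ub (ex_intro2 _ _ y' ey' erefl).
rewrite -/(opnorm2 M) -scalemxAl enormZ ger0_norm ?invr_ge0 ?enorm_ge0 //.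
by rewrite ler_pdivrMl // mulrC.
Qed.

Lemma decay (e P : nat -> R) (rho A B : R) :
  0 <= rho < 1 -> 0 <= A -> 0 <= B ->
  (forall k, (1 <= k)%N -> 0 < P k) ->
  (forall k, (1 <= k)%N -> P k.+1 * k%:R <= (k%:R + 1) * P k) ->
  (forall k, (1 <= k)%N -> e k.+1 <= rho * e k + A / P k * B) ->
  exists c K, forall k, (K <= k)%N -> e k <= c / P k.
Proof.
move=> /andP[r0 r1] A0 B0 Ppos Pinc rec.
set K := (Num.Def.truncn (2 / (1 - rho))).+1.
have HK := truncnS_gt (2 / (1 - rho)); rewrite -/K in HK.
have K1 : (1 <= K)%N by [].
set c := Num.max (4 * A * B / (1 - rho)) (e K * P K).
have c1 : 4 * A * B / (1 - rho) <= c by rewrite le_max lexx.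
have c2 : e K * P K <= c by rewrite le_max lexx orbT.
have c1' : 4 * A * B <= c * (1 - rho) by rewrite -ler_pdivrMr // subr_gt0.
have cpos : 0 <= c.
  apply: le_trans c1; apply: divr_ge0; [by rewrite !mulr_ge0 | lra].
exists c, K; elim => [|k IH]; first by rewrite leqn0.
rewrite leq_eqVlt => /orP [/eqP <-|Kk].
  by rewrite ler_pdivlMr ?Ppos.
have k1 : (1 <= k)%N := leq_trans K1 Kk.
have ek := IH Kk.
have pp := Ppos _ k1; have pp' := Ppos _ (leq_trans k1 (leqnSn k)).
have hi := Pinc _ k1.
have kK : K%:R <= k%:R :> R by rewrite ler_nat.
have kpos : 1 <= k%:R :> R by rewrite ler1n.
have kr : 2 <= k%:R * (1 - rho).
  have : 2 / (1 - rho) <= k%:R by lra.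
  by rewrite ler_pdivrMr ?subr_gt0.
have step1 : e k.+1 <= (rho * c + A * B) / P k.
  apply: le_trans (rec _ k1) _.
  have : rho * e k <= rho * (c / P k) by rewrite ler_wpM2l.
  rewrite mulrDl [A * B / _]mulrAC -mulrA; lra.
set X := rho * c + A * B.
have ab0 : 0 <= X by rewrite addr_ge0 ?mulr_ge0.
have key : X * (k%:R + 1) <= c * k%:R.
  have h1 : 2 * c <= c * (k%:R * (1 - rho)) by rewrite [2 * c]mulrC ler_wpM2l.
  have h2 : 4 * A * B * k%:R <= c * (1 - rho) * k%:R by rewrite ler_wpM2r // ler0n.
  have AB0 : 0 <= A * B by rewrite mulr_ge0.
  rewrite /X; nra.
have a : X * (P k.+1 * k%:R) <= X * ((k%:R + 1) * P k) by rewrite ler_wpM2l.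
have b : X * (k%:R + 1) * P k <= c * k%:R * P k by rewrite ler_wpM2r // ltW.
have main : X * P k.+1 <= c * P k.
  have : (X * P k.+1) * k%:R <= (c * P k) * k%:R.
    rewrite -mulrA; apply: le_trans a _; rewrite mulrA; apply: le_trans b _.
    by rewrite -mulrA [k%:R * _]mulrC mulrA.
  by rewrite ler_pM2r // (lt_le_trans ltr01 kpos).
apply: le_trans step1 _.
by rewrite ler_pdivrMr // mulrAC ler_pdivlMr.
Qed.

Lemma powR_step (alpha : R) k : 0 < alpha <= 1 -> (1 <= k)%N ->
  (k.+1%:R `^ alpha) * k%:R <= (k%:R + 1) * (k%:R `^ alpha).
Proof.
move=> /andP[a0 a1] k1.
have kpos : 0 < k%:R :> R by rewrite ltr0n.
have -> : k.+1%:R = k%:R * ((k%:R + 1) / k%:R) :> R.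
  by rewrite -addn1 natrD mulrC divfK // gt_eqF.
have q1 : 1 <= (k%:R + 1) / k%:R :> R by rewrite ler_pdivlMr // mul1r lerDl.
rewrite powRM; [|exact: ltW|exact: le_trans ler01 q1].
have : ((k%:R + 1) / k%:R) `^ alpha <= (k%:R + 1) / k%:R :> R.
  by rewrite -[X in _ <= X]powRr1 ?(le_trans ler01 q1) // ler_powR.
have p0 : 0 <= k%:R `^ alpha :> R by apply: ltW; apply: powR_gt0.
move=> h.
have h2 : ((k%:R + 1) / k%:R) `^ alpha * k%:R <= k%:R + 1 by rewrite -ler_pdivlMr.
by rewrite -mulrA [X in _ <= X]mulrC ler_wpM2l.
Qed.

Lemma netavgE m dim (z : 'I_m -> 'rV[R]_dim) c :
  netavg z 0 c = m%:R^-1 * \sum_i z i 0 c.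
Proof. by rewrite /netavg mxE summxE. Qed.

Lemma mixE m dim (W : 'M[R]_m) (z : 'I_m -> 'rV[R]_dim) i c :
  mix W z i 0 c = \sum_j W i j * z j 0 c.
Proof. by rewrite /mix summxE; apply: eq_bigr => j _; rewrite mxE. Qed.

Lemma rec_identity m dim (W : 'M[R]_m) (xk xk1 uk : 'I_m -> 'rV[R]_dim) g c :
  (0 < m)%N -> W^T = W -> (forall j, \sum_i W i j = 1) -> (forall i, \sum_j W i j = 1) ->
  (forall i, xk1 i = (1 - g) *: mix W xk i + g *: uk i) ->
  \row_i (xk1 i 0 c - netavg xk1 0 c) =
  (1 - g) *: ((\row_i (xk i 0 c - netavg xk 0 c)) *m (W - avgmx m))
   + g *: \row_i (uk i 0 c - netavg uk 0 c).
Proof.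
move=> m0 WT Wc Wr hx.
have sym : forall i j, W j i = W i j.
  by move=> i j; rewrite -[in LHS]WT mxE.
have mnz : m%:R != 0 :> R by rewrite pnatr_eq0 -lt0n.
have summi : \sum_(j < m) m%:R^-1 = 1 :> R.
  by rewrite sumr_const card_ord -[X in X *+ _ = _]mulr1 -mulrnAr mulVf.
set xbar := m%:R^-1 * \sum_j xk j 0 c.
set ubar := m%:R^-1 * \sum_j uk j 0 c.
have avg1 : netavg xk1 0 c = (1 - g) * xbar + g * ubar.
  rewrite netavgE.
  have -> : \sum_i xk1 i 0 c = (1 - g) * \sum_j xk j 0 c + g * \sum_j uk j 0 c.
    rewrite !mulr_sumr.
    have -> : \sum_i xk1 i 0 c = \sum_i ((1 - g) * \sum_j W i j * xk j 0 c + g * uk i 0 c).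
      by apply: eq_bigr => i _; rewrite hx !mxE mixE.
    rewrite big_split /=; congr (_ + _).
    rewrite -!mulr_sumr; congr (_ * _); rewrite exchange_big /=.
    by apply: eq_bigr => j _; rewrite -mulr_suml Wc mul1r.
  rewrite /xbar /ubar; ring.
rewrite [netavg xk1 0 c]avg1 !netavgE -/xbar -/ubar.
apply/rowP => i; rewrite !mxE hx !mxE mixE.
under [X in _ = _ * X + _]eq_bigr do rewrite !mxE.
have -> : \sum_j (xk j 0 c - xbar) * (W j i - m%:R^-1)
   = \sum_j W i j * xk j 0 c - xbar.
  have -> : \sum_j (xk j 0 c - xbar) * (W j i - m%:R^-1)
     = \sum_j (W i j * xk j 0 c - xbar * W i j - m%:R^-1 * xk j 0 c + xbar * m%:R^-1).
    apply: eq_bigr => j _; rewrite sym; ring.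
  rewrite !big_split /= !sumrN -!mulr_sumr -/xbar summi Wr.
  ring.
ring.
Qed.

Lemma bnd dim (O : set 'rV[R]_dim) : compact O -> exists M : R, forall y, O y -> forall c, `|y 0 c| <= M.
Proof.
move=> /compact_bounded [M0 [_ HM]].
exists (M0+1) => y Oy c.
have := HM (M0+1) ltac:(lra) y Oy. rewrite /=. rewrite -[X in X <= _ -> _]/(mx_norm y) mx_normrE.
move=> h; apply: le_trans h.
rewrite (le_trans _ (le_bigmax _ _ (0, c))) //.
Qed.
End H.
Theorem theorem1 (R : realType) (dim m : nat) (n : 'I_m -> nat)
  (* objective data *)
  (f : forall i : 'I_m, 'I_(n i) -> 'rV[R]_dim -> R)
  (gf : forall i : 'I_m, 'I_(n i) -> 'rV[R]_dim -> 'rV[R]_dim)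
  (Omega : set 'rV[R]_dim) (L G C : R)
  (* network *)
  (E : rel 'I_m) (W : 'M[R]_m)
  (* algorithm parameters *)
  (q : nat) (A alpha : R) (gamma : nat -> R)
  (S : nat -> forall i : 'I_m, seq 'I_(n i))
  (* algorithm iterates *)
  (x dd v g u : nat -> 'I_m -> 'rV[R]_dim) :
  (0 < m)%N -> (forall i, 0 < n i)%N ->
  (* Assumption 1 *)
  Omega !=set0 -> convex_set_rV Omega -> compact Omega ->
  (* standing regularity: f_{ij} differentiable and L-smooth on an open
     neighbourhood of Omega, with gradient gf i j *)
  (exists U : set 'rV[R]_dim, open U /\ Omega `<=` U /\
     forall i j, forall y, U y ->
       differentiable (f i j) y /\
       (forall w, 'D_w (f i j) y = dotv (gf i j y) w) /\
       (forall z, U z -> enorm (gf i j y - gf i j z) <= L * enorm (y - z))) ->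
  (forall i y z, Omega y -> Omega z ->
     `| (n i)%:R^-1 * \sum_(j < n i) f i j y
        - (n i)%:R^-1 * \sum_(j < n i) f i j z | <= G * enorm (y - z)) ->
  (forall i y, Omega y -> enorm (fullgrad (gf i) y) <= C) ->
  (* Assumption 2 *)
  (forall i j, E i j = E j i) -> (forall i, ~~ E i i) ->
  (forall i j, connect E i j) ->
  W^T = W -> (forall i j, 0 <= W i j) ->
  (forall i j, i != j -> ~~ E i j -> W i j = 0) ->
  (forall i, \sum_(j < m) W i j = 1) -> (forall j, \sum_(i < m) W i j = 1) ->
  opnorm2 (W - avgmx m) < 1 ->
  (* step sizes gamma_k = A / k^alpha in (0,1] *)
  0 < alpha <= 1 -> 0 < A ->
  (forall k, (1 <= k)%N -> gamma k = A / (k%:R `^ alpha)) ->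
  (forall k, (1 <= k)%N -> 0 < gamma k <= 1) ->
  (0 < q)%N ->
  (* sample sets: arbitrary nonempty realizations *)
  (forall k i, (0 < size (S k i))%N) ->
  (* initialization *)
  (forall i, Omega (x 1%N i)) ->
  (forall i, dd 1%N i = fullgrad (gf i) (x 1%N i) /\
             v 1%N i = fullgrad (gf i) (x 1%N i) /\
             g 1%N i = fullgrad (gf i) (x 1%N i)) ->
  (* DstoFW iteration *)
  (forall k i, (1 <= k)%N ->
     [/\ Omega (u k i) /\ (forall w, Omega w -> dotv (u k i) (dd k i) <= dotv w (dd k i)),
         x k.+1 i = (1 - gamma k) *: mix W (x k) i + gamma k *: u k i,
         v k.+1 i = (if (k.+1 %% q == 0)%N then fullgrad (gf i) (x k.+1 i)
                     else (size (S k i))%:R^-1 *: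
                            \sum_(j <- S k i) (gf i j (x k.+1 i) - gf i j (x k i))
                          + v k i),
         g k.+1 i = dd k i + v k.+1 i - v k i &
         dd k.+1 i = mix W (g k.+1) i]) ->
  (* conclusion: ||x_i^k - xbar^k|| = O(1/k^alpha) *)
  forall i, exists (c : R) (K : nat), forall k, (K <= k)%N ->
    enorm (x k i - netavg (x k)) <= c / (k%:R `^ alpha).
Proof.
move=> Hm Hn HOne HOconv HOcomp Hsmooth HLip HC HEsym HEirr Hconn HWsym HWnn HWE
  HWrow HWcol Hop Halpha HA Hgamma Hgam01 Hq HS Hx1 Hinit Hrec i.
have [M0 HM0] := bnd HOcomp.
set M := Num.max M0 0.
have M0le : 0 <= M by rewrite le_max lexx orbT.
have Hu : forall k, (1 <= k)%N -> forall j c, `|u k j 0 c| <= M.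
  move=> k k1 j c; case: (Hrec k j k1) => [[Hu _] _ _ _ _].
  by apply: le_trans (HM0 _ Hu c) _; rewrite le_max lexx.
set lam := opnorm2 (W - avgmx m).
set rho := Num.max lam 0.
have rho0 : 0 <= rho by rewrite le_max lexx orbT.
have lamrho : lam <= rho by rewrite le_max lexx.
have rho1 : rho < 1 by rewrite gt_max Hop ltr01.
pose z k c : 'rV[R]_m := \row_j (x k j 0 c - netavg (x k) 0 c).
pose w k c : 'rV[R]_m := \row_j (u k j 0 c - netavg (u k) 0 c).
pose e k := \sum_(c < dim) enorm (z k c).
pose B := \sum_(c < dim) \sum_(j < m) (M + M).
have B0 : 0 <= B by apply: sumr_ge0 => c _; apply: sumr_ge0 => j _; lra.
have Bw : forall k, (1 <= k)%N -> forall c, enorm (w k c) <= \sum_(j < m) (M + M).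
  move=> k k1 c; apply: le_trans (enorm_le_sum _) _; apply: ler_sum => j _.
  rewrite mxE; apply: le_trans (ler_normB _ _) _; apply: lerD; first exact: Hu.
  rewrite netavgE normrM ger0_norm ?invr_ge0 ?ler0n //.
  have mpos : 0 < m%:R :> R by rewrite ltr0n.
  rewrite ler_pdivrMl //; apply: le_trans (ler_norm_sum _ _ _) _.
  have : \sum_(j < m) `|u k j 0 c| <= \sum_(j < m) M by apply: ler_sum => jj _; exact: Hu.
  move/le_trans; apply; by rewrite sumr_const card_ord mulr_natl.
have stepc : forall k, (1 <= k)%N -> forall c,
    enorm (z k.+1 c) <= rho * enorm (z k c) + gamma k * \sum_(j < m) (M + M).
  move=> k k1 c.
  have hx : forall j, x k.+1 j = (1 - gamma k) *: mix W (x k) j + gamma k *: u k j.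
    by move=> j; case: (Hrec k j k1).
  rewrite /z (rec_identity c Hm HWsym HWcol HWrow hx) -/(z k c) -/(w k c).
  apply: le_trans (enormD _ _) _; rewrite !enormZ.
  have /andP[g0 g1] := Hgam01 k k1.
  rewrite ger0_norm ?subr_ge0 // ger0_norm; last exact: ltW.
  have ez := enorm_ge0 (z k c).
  have hop := opnorm_bound (W - avgmx m) (z k c); rewrite -/lam in hop.
  have hw := Bw k k1 c.
  have h1 : lam * enorm (z k c) <= rho * enorm (z k c) by rewrite ler_wpM2r.
  have h2 : (1 - gamma k) * enorm (z k c *m (W - avgmx m)) <= (1 - gamma k) * (rho * enorm (z k c)).
    by rewrite ler_wpM2l ?subr_ge0 //; apply: le_trans hop h1.
  have h3 : gamma k * enorm (w k c) <= gamma k * \sum_(j < m) (M + M) by apply: ler_wpM2l => //; exact: ltW.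
  have h4 : 0 <= rho * enorm (z k c) by rewrite mulr_ge0.
  nra.
have stepe : forall k, (1 <= k)%N -> e k.+1 <= rho * e k + A / (k%:R `^ alpha) * B.
  move=> k k1; rewrite -Hgamma // /e /B mulr_sumr mulr_sumr -big_split /=.
  by apply: ler_sum => c _; apply: stepc.
have Ppos : forall k, (1 <= k)%N -> 0 < k%:R `^ alpha :> R.
  by move=> k k1; apply: powR_gt0; rewrite ltr0n.
have Pinc : forall k, (1 <= k)%N ->
    (k.+1%:R `^ alpha) * k%:R <= (k%:R + 1) * (k%:R `^ alpha) :> R.
  by move=> k k1; apply: powR_step.
have hr : 0 <= rho < 1 by apply/andP.
have [c [K HK]] := decay hr (ltW HA) B0 Ppos Pinc stepe.
exists c, K => k Kk.
apply: le_trans (HK k Kk); apply: le_trans (enorm_le_sum _) _.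
apply: ler_sum => cc _.
have := abs_le_enorm (z k cc) i.
by rewrite /z !mxE.
Qed.
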